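(* Let $p \geq 3$ be a prime and $x, y \in \mathbb{Z}$ with $x^2 - 2 = y^p$ and $y \neq -1$. Then: (1) every prime factor of $\frac{y^p-1}{y-1}$ is $\equiv \pm 1 \pmod{12}$; (2) every prime factor of $\frac{y^p-1}{y-1}$ is $p$ or $\equiv 1 \pmod p$; either $p \nmid (y-1)$ and $\frac{y^p-1}{y-1} \equiv 1 \pmod p$, or $p \mid (y-1)$ and $\frac{y^p-1}{y-1} \equiv p \pmod{p^2}$, and the latter case cannot happen unless $p \equiv \pm 1 \pmod{12}$; (3) $\frac{y^p-1}{y-1} \equiv 1 \pmod{24}$; (4) if $p \equiv 2 \pmod 3$ or $p = 3$, then $3 \nmid x$. *)

(* Defs.v *)
From mathcomp Require Import all_boot all_order all_algebra.
Set Implicit Arguments. Unset Strict Implicit. Unset Printing Implicit Defensive.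
Import Order.TTheory GRing.Theory Num.Theory.
Local Open Scope ring_scope.

(* The integer (y^p - 1)/(y - 1), written literally as an integer quotient.
   (In the theorem y <> 1 automatically, since x^2 - 2 = 1 has no integer
   solution, so this is an exact division.) *)
Definition Phi (y : int) (p : nat) : int := ((y ^+ p - 1) %/ (y - 1))%Z.

Definition pm1_mod (q m : nat) : bool := (q %% m == 1 %% m)%N || (q %% m == (m - 1) %% m)%N.

(* Main.v *)
From mathcomp Require Import all_boot all_order all_algebra all_field.
Require Import Defs.
From mathcomp Require Import zify ring lra.
Import Order.TTheory GRing.Theory Num.Theory.
Local Open Scope ring_scope.

Lemma Zm_nat0 (m n : nat) : (1 < m)%N -> ((n%:R : 'Z_m) == 0) = (m %| n)%N.
Proof. move=> m1. by rewrite -(inj_eq val_inj) /= val_Zp_nat. Qed.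

Lemma Zm_int0 (m : nat) (z : int) : (1 < m)%N -> ((z%:~R : 'Z_m) == 0) = (m %| z)%Z.
Proof.
move=> m1; case: z => n.
  by rewrite [_%:~R]/(n%:R) Zm_nat0.
rewrite NegzE mulrNz oppr_eq0 [_%:~R]/(n.+1%:R) Zm_nat0 //.
Qed.

Lemma Zm_inteq (m : nat) (a b : int) : (1 < m)%N -> ((a%:~R : 'Z_m) == b%:~R) = (m %| a - b)%Z.
Proof. by move=> m1; rewrite -subr_eq0 -intrB Zm_int0. Qed.

Lemma Fp_int0 (q : nat) (z : int) : prime q -> ((z%:~R : 'F_q) == 0) = (q %| z)%Z.
Proof. move=> pq; rewrite Zm_int0 ?pdiv_id //; exact: prime_gt1. Qed.

Lemma Fp_inteq (q : nat) (a b : int) : prime q -> ((a%:~R : 'F_q) == b%:~R) = (q %| a - b)%Z.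
Proof. by move=> pq; rewrite -subr_eq0 -intrB Fp_int0. Qed.

Lemma Fp_nat0 (q n : nat) : prime q -> ((n%:R : 'F_q) == 0) = (q %| n)%N.
Proof. move=> pq; exact: (@Fp_int0 q n pq). Qed.

Lemma cardFp (q : nat) : prime q -> #|'F_q| = q.
Proof. exact: card_Fp. Qed.

Lemma fermat (q : nat) (a : 'F_q) : prime q -> a != 0 -> a ^+ (q.-1) = 1.
Proof.
move=> pq a0. apply: (mulfI a0). rewrite -exprS prednK ?prime_gt0 // mulr1.
by have := expf_card a; rewrite card_Fp.
Qed.

Lemma exists_nonroot (q m : nat) : prime q -> (0 < m)%N -> (m < q.-1)%N ->
  exists a : 'F_q, a != 0 /\ a ^+ m != 1.
Proof.
move=> pq m0 mq.
case: (boolP [exists a : 'F_q, (a != 0) && (a ^+ m != 1)]).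
  by case/existsP => a /andP[a0 am]; exists a.
rewrite negb_exists => /forallP H.
have Hr : all (root ('X^m - 1)) (enum (predC1 (0 : 'F_q))).
  apply/allP => a; rewrite mem_enum /= => a0.
  have := H a; rewrite (_ : (a != 0) = true) //= negbK => /eqP am.
  by rewrite /root !hornerE am subrr.
have nz : ('X^m - 1 : {poly 'F_q}) != 0 by rewrite -size_poly_eq0 size_XnsubC.
have := max_poly_roots nz Hr (enum_uniq _).
rewrite size_XnsubC // -cardE cardC1 card_Fp // => h; exfalso; lia.
Qed.

Lemma F2ne0 (q : nat) : prime q -> (2 < q)%N -> (2%:R : 'F_q) != 0.
Proof. move=> pq q2; rewrite Fp_nat0 //; apply/negP => /(dvdn_leq (isT : (0 < _.+1)%N)); lia. Qed.
Lemma F3ne0 (q : nat) : prime q -> (3 < q)%N -> (3%:R : 'F_q) != 0.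
Proof. move=> pq q2; rewrite Fp_nat0 //; apply/negP => /(dvdn_leq (isT : (0 < _.+1)%N)); lia. Qed.

Lemma neg1_fwd (q : nat) (b : 'F_q) : prime q -> (2 < q)%N -> b ^+ 2 = -1 -> (4 %| q.-1)%N.
Proof.
move=> pq q2 hb. have b0 : b != 0 by apply: contra_eq_neq hb => ->; rewrite expr0n /= eq_sym oppr_eq0 oner_eq0.
have := @fermat q b pq b0. have oq : odd q by case: (even_prime pq) => // q2'; lia.
case: (boolP (4 %| q.-1)%N) => // h4.
have -> : q.-1 = (4 * (q.-1 %/ 4) + 2)%N.
  by lia.
rewrite exprD exprM hb (_ : 4 = 2 * 2)%N // exprM hb sqrrN expr1n expr1n mul1r => /eqP.
by rewrite -subr_eq0 -opprD oppr_eq0 (negbTE (F2ne0 q pq q2)).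
Qed.


Lemma neg1_bwd (q : nat) : prime q -> (4 %| q.-1)%N -> exists b : 'F_q, b ^+ 2 = -1.
Proof.
move=> pq h4. have hq1 : q.-1 = (4 * (q.-1 %/ 4))%N by rewrite mulnC divnK.
have q2 := prime_gt1 pq.
set k := (q.-1 %/ 4)%N in hq1.
have [a [a0 am]] := @exists_nonroot q (2*k) pq ltac:(lia) ltac:(lia).
exists (a ^+ k). rewrite -exprM mulnC.
have s2 : (a ^+ (2 * k)) ^+ 2 = 1.
  by rewrite -exprM (_ : (2*k*2 = q.-1)%N) ?(@fermat q a pq a0) //; lia.
move: am s2; set s := a ^+ (2*k) => am s2.
have : (s - 1) * (s + 1) = 0 by rewrite -subr_sqr s2 expr1n subrr.
move/eqP; rewrite mulf_eq0 subr_eq0 (negbTE am) /= addr_eq0 => /eqP //.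
Qed.

Lemma nd12 (q : nat) : prime q -> (3 < q)%N -> ~~ (q %| 12)%N.
Proof.
move=> pq q3; rewrite (_ : 12 = 3*2*2)%N // !Euclid_dvdM //.
by apply/negP => /orP[/orP[]|] /(dvdn_leq (isT : (0 < _.+1)%N)); lia.
Qed.

Lemma neg3_fwd (q : nat) (c : 'F_q) : prime q -> (3 < q)%N -> c ^+ 2 = - 3%:R -> (3 %| q.-1)%N.
Proof.
move=> pq q3 hc.
have h2 : (2%:R : 'F_q) != 0 by apply: F2ne0 => //; lia.
set w := (c - 1) / 2%:R.
have w3 : w ^+ 3 = 1.
  apply/eqP; rewrite -subr_eq0; apply/eqP.
  have -> : w ^+ 3 - 1 = (c - 3%:R) * (c ^+ 2 + 3%:R) / 8%:R.
    rewrite /w. field. by rewrite (_ : 8 = 2 * 2 * 2)%N // !natrM !mulf_neq0.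
  by rewrite hc addNr mulr0 mul0r.
have w1 : w != 1.
  apply/negP => /eqP hw.
  have hc3 : c = 3%:R.
    have : c - 1 = 2%:R by rewrite -[c - 1](mulfVK h2) -/w hw mul1r.
    by move/eqP; rewrite subr_eq => /eqP ->; rewrite natr1.
  move: hc; rewrite hc3 -natrX => /eqP; rewrite -subr_eq0 opprK -natrD Fp_nat0 //.
  by rewrite (negbTE (nd12 q pq q3)).
have w0 : w != 0 by apply/negP => /eqP w0; move: w3; rewrite w0 expr0n /= => /eqP; rewrite eq_sym oner_eq0.
have := @fermat q w pq w0.
case: (boolP (3 %| q.-1)%N) => // h3.
have [hr|hr] : (q.-1 = 3 * (q.-1 %/ 3) + 1)%N \/ (q.-1 = 3 * (q.-1 %/ 3) + 2)%N by lia.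
  by rewrite hr exprD exprM w3 expr1n mul1r expr1 => /eqP; rewrite (negbTE w1).
rewrite hr exprD exprM w3 expr1n mul1r => hw2.
by move: w3; rewrite exprS hw2 mulr1 => /eqP; rewrite (negbTE w1).
Qed.

Lemma neg3_bwd (q : nat) : prime q -> (3 %| q.-1)%N -> exists c : 'F_q, c ^+ 2 = - 3%:R.
Proof.
move=> pq h3. have hq1 : q.-1 = (3 * (q.-1 %/ 3))%N by rewrite mulnC divnK.
have q2 := prime_gt1 pq.
set k := (q.-1 %/ 3)%N in hq1.
have [a [a0 am]] := @exists_nonroot q k pq ltac:(lia) ltac:(lia).
have b3 : (a ^+ k) ^+ 3 = 1 by rewrite -exprM mulnC -hq1 (@fermat q a pq a0).
move: am b3; set b := a ^+ k => am b3.
have hb : b ^+ 2 + b + 1 = 0.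
  have : (b - 1) * (b ^+ 2 + b + 1) = 0.
    have -> : (b - 1) * (b ^+ 2 + b + 1) = b ^+ 3 - 1 by ring.
    by rewrite b3 subrr.
  by move/eqP; rewrite mulf_eq0 subr_eq0 (negbTE am) /= => /eqP.
exists (2%:R * b + 1).
have -> : (2%:R * b + 1) ^+ 2 = 4%:R * (b ^+ 2 + b + 1) - 3%:R by ring.
by rewrite hb mulr0 sub0r.
Qed.

Lemma sq3_pm1 (q : nat) (a : 'F_q) : prime q -> (3 < q)%N -> a ^+ 2 = 3%:R -> pm1_mod q 12.
Proof.
move=> pq q3 ha.
have h3 : (3%:R : 'F_q) != 0 by apply: F3ne0.
have a0 : a != 0 by apply/negP => /eqP a0; move: ha h3; rewrite a0 expr0n /= => <-; rewrite eqxx.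
have e : (4 %| q.-1)%N = (3 %| q.-1)%N.
  apply/idP/idP => h.
    have [b hb] := neg1_bwd q pq h.
    apply: (@neg3_fwd q (a * b) pq q3).
    by rewrite exprMn ha hb mulrN1.
  have [c hc] := neg3_bwd q pq h.
  apply: (@neg1_fwd q (c / a) pq ltac:(lia)).
  by rewrite expr_div_n hc ha mulNr divff.
have n3 : ~~ (3 %| q)%N.
  by apply/negP => /(prime_nt_dvdP pq (isT : 3 != 1)%N); lia.
have n2 : ~~ (2 %| q)%N.
  by apply/negP => /(prime_nt_dvdP pq (isT : 2 != 1)%N); lia.
rewrite /pm1_mod.
case: (boolP (4 %| q.-1)%N) => h4.
  have := h4; rewrite e => h3'. lia.
have := h4; rewrite e => h3'. lia.
Qed.

Lemma powodd (R : pzRingType) (Y : R) (p : nat) :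
  Y ^+ 3 * Y ^+ 2 = Y ^+ 3 -> odd p -> (3 <= p)%N -> Y ^+ p = Y ^+ 3.
Proof.
move=> h op p3. have -> : p = (3 + 2 * ((p - 3) %/ 2))%N.
  have : (p %% 2 = 1)%N by rewrite modn2 op.
  move=> d; lia.
rewrite exprD; elim: ((p - 3) %/ 2)%N => [|j IH]; first by rewrite mulr1.
by rewrite mulnS exprD mulrA h IH.
Qed.

Lemma altsum (R : pzRingType) (p : nat) : \sum_(i < p) (-1 : R) ^+ i = (odd p)%:R.
Proof.
elim: p => [|p IH]; first by rewrite big_ord0.
rewrite big_ord_recr /= IH -signr_odd; case: (odd p) => /=.
  by rewrite expr1 addrN.
by rewrite expr0 add0r.
Qed.

Lemma Z8pow (Y : 'Z_8) : Y^+3 * Y^+2 = Y^+3.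
Proof. apply/val_inj; case: Y => m Hm. by do 8?[case: m Hm => [|m] Hm; first by vm_compute]. Qed.
Lemma Z8sol (X Y : 'Z_8) : X^+2 - 2%:R = Y^+3 -> Y = -1.
Proof. move/(congr1 val). case: Y => m Hm; case: X => n Hn.
 do 8?[case: m Hm => [|m] Hm]; do 8?[case: n Hn => [|n] Hn]; try (by vm_compute); by move=> _; apply/val_inj. Qed.
Lemma Z3pow (Y : 'Z_3) : Y^+3 * Y^+2 = Y^+3.
Proof. apply/val_inj; case: Y => m Hm. by do 3?[case: m Hm => [|m] Hm; first by vm_compute]. Qed.
Lemma Z3sq (X : 'Z_3) : X^+2 - 3%:R = 0 -> X = 0.
Proof. move/(congr1 val). case: X => n Hn.
 do 3?[case: n Hn => [|n] Hn]; try (by vm_compute); by move=> _; apply/val_inj. Qed.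
Lemma Z3cube (Y : 'Z_3) : Y^+3 = - 2%:R -> Y = 1.
Proof. move/(congr1 val). case: Y => n Hn.
 do 3?[case: n Hn => [|n] Hn]; try (by vm_compute); by move=> _; apply/val_inj. Qed.

Lemma PhiE (y : int) (p : nat) : y != 1 -> Phi y p = \sum_(i < p) y ^+ i.
Proof. by move=> y1; rewrite /Phi subrX1 mulKz // subr_eq0. Qed.

Lemma PhiM (y : int) (p : nat) : y != 1 -> (y - 1) * Phi y p = y ^+ p - 1.
Proof. by move=> y1; rewrite PhiE // subrX1. Qed.

Section Main.
Variables (p : nat) (x y : int).
Hypotheses (pp : prime p) (p3 : (3 <= p)%N) (hxy : x ^+ 2 - 2 = y ^+ p) (hy : y != -1).

Lemma op : odd p.
Proof. by case: (even_prime pp) => // e; move: p3; rewrite e. Qed.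

Lemma y8 : (8 %| y + 1)%Z.
Proof.
have := congr1 (fun z : int => (z%:~R : 'Z_8)) hxy.
rewrite /= rmorphB rmorphXn rmorphXn rmorph_nat (@powodd _ _ _ (Z8pow _) op p3) => /Z8sol h.
have := Zm_inteq 8 y (-1) isT. by rewrite h mulrN1z eqxx opprK => <-.
Qed.

Lemma y1 : y != 1.
Proof. apply/negP => /eqP e; have := y8; rewrite e. by []. Qed.

Lemma Phi8 : (8 %| Phi y p - 1)%Z.
Proof.
rewrite -Zm_inteq // PhiE ?y1 // rmorph_sum /=.
have hy8 : (y%:~R : 'Z_8) = -1.
  by apply/eqP; rewrite -mulrN1z Zm_inteq // opprK y8.
under eq_bigr do rewrite rmorphXn /= hy8.
by rewrite altsum op.
Qed.

Lemma PhiX : (y - 1) * Phi y p = x ^+ 2 - 3.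
Proof. by rewrite PhiM ?y1 // -hxy; ring. Qed.

Lemma three : (3 %| x)%Z -> (3 %| y - 1)%Z /\ (3 %| Phi y p - p%:Z)%Z.
Proof.
move=> h3.
have hx : (x%:~R : 'Z_3) = 0 by apply/eqP; rewrite Zm_int0.
have := congr1 (fun z : int => (z%:~R : 'Z_3)) hxy.
rewrite /= rmorphB rmorphXn rmorphXn rmorph_nat (@powodd _ _ _ (Z3pow _) op p3) /= hx expr0n /= sub0r.
move/esym/Z3cube => hy1.
split; first by rewrite -Zm_inteq // hy1.
rewrite -Zm_inteq // PhiE ?y1 // rmorph_sum /=.
under eq_bigr do rewrite rmorphXn /= hy1 expr1n.
by rewrite sumr_const card_ord.
Qed.


Lemma not3 : ~~ (3 %| Phi y p)%Z.
Proof.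
apply/negP => h.
have hx2 : (3 %| x ^+ 2 - 3)%Z by rewrite -PhiX dvdz_mull.
have h3x : (3 %| x)%Z.
  move: hx2; rewrite -Zm_int0 // rmorphB rmorphXn rmorph_nat => /eqP /Z3sq /eqP.
  by rewrite Zm_int0.
have [hy1 _] := three h3x.
have a : (3 * 3 %| x ^+ 2 - 3)%Z by rewrite -PhiX; apply: dvdz_mul.
have b : (3 * 3 %| x ^+ 2)%Z by rewrite expr2; apply: dvdz_mul.
lia.
Qed.

Lemma part1 (q : nat) : prime q -> (q %| Phi y p)%Z -> pm1_mod q 12.
Proof.
move=> pq hq.
have q2 : q <> 2%N by move=> e; move: hq Phi8; rewrite e; lia.
have q3 : q <> 3%N by move=> e; move: hq not3; rewrite e => ->.
have q1 := prime_gt1 pq.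
apply: (@sq3_pm1 q (x%:~R) pq ltac:(lia)).
have : (q %| x ^+ 2 - 3)%Z by rewrite -PhiX dvdz_mull.
by rewrite -Fp_int0 // rmorphB rmorphXn rmorph_nat subr_eq0 => /eqP.
Qed.

Lemma Phi_modq (q : nat) : prime q -> (q %| y - 1)%Z -> (q %| Phi y p - p%:Z)%Z.
Proof.
move=> pq hq.
have hY : (y%:~R : 'F_q) = 1 by apply/eqP; rewrite -(mulr1z 1) Fp_inteq.
rewrite -Fp_inteq // PhiE ?y1 // rmorph_sum /=.
under eq_bigr do rewrite rmorphXn /= hY expr1n.
by rewrite sumr_const card_ord.
Qed.

Lemma part2a (q : nat) : prime q -> (q %| Phi y p)%Z -> q = p \/ (q %% p = 1)%N.
Proof.
move=> pq hq.
have q1 := prime_gt1 pq.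
have hq1 : (q %| y ^+ p - 1)%Z by rewrite -PhiM ?y1 // dvdz_mull.
set Y := (y%:~R : 'F_q).
have hYp : Y ^+ p = 1.
  by move: hq1; rewrite -Fp_int0 // rmorphB rmorphXn rmorph1 subr_eq0 => /eqP.
case: (eqVneq Y 1) => hY1.
  left. have h1 : (q %| y - 1)%Z by rewrite -Fp_inteq // mulr1z; apply/eqP.
  have hm := Phi_modq q pq h1.
  have hp : (q %| p%:Z)%Z by rewrite -(subrK (Phi y p) p%:Z) -opprB rpredD ?rpredN.
  apply/(prime_nt_dvdP pp) => //. by apply/eqP; lia.
have Y0 : Y != 0 by apply/negP => /eqP e; move: hYp; rewrite e expr0n; case: (p) p3 => //= _ _ /eqP; rewrite eq_sym oner_eq0.
have hF := @fermat q Y pq Y0.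
right.
case: (boolP (p %| q.-1)%N) => hd.
  case/dvdnP: hd => k hk.
  have -> : q = (k * p + 1)%N by lia.
  rewrite modnMDl modn_small //; lia.
have cop : coprime p q.-1 by rewrite prime_coprime.
have [a _ ha] := Bezoutl q.-1 (prime_gt0 pp).
move: ha; rewrite (eqP cop) => /dvdnP [t ht].
have : Y ^+ (1 + a * q.-1) = Y by rewrite exprD expr1 mulnC exprM hF expr1n mulr1.
rewrite ht mulnC exprM hYp expr1n => e.
by rewrite -e eqxx in hY1.
Qed.

Lemma part2c : (p %| y - 1)%Z -> pm1_mod p 12.
Proof.
move=> h; apply: part1 => //.
have := Phi_modq p pp h.
by move=> hp; rewrite -(subrK (p%:Z) (Phi y p)) rpredD // dvdzz.
Qed.


Lemma part2b_no : ~~ (p %| y - 1)%Z -> (Phi y p == 1 %[mod p])%Z.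
Proof.
move=> hp. rewrite eqz_mod_dvd -Fp_inteq // mulr1z.
have hY : (y%:~R : 'F_p) != 1 by rewrite -(mulr1z 1) Fp_inteq.
have hYp : (y%:~R : 'F_p) ^+ p = y%:~R by have := expf_card (y%:~R : 'F_p); rewrite card_Fp.
have := congr1 (fun z : int => (z%:~R : 'F_p)) (PhiM y p y1).
rewrite /= rmorphM !rmorphB rmorphXn !rmorph1 /= hYp -{2}(mulr1 (y%:~R - 1)).
move/(mulfI _) => -> //. by rewrite subr_eq0.
Qed.

Lemma part2b_yes : (p %| y - 1)%Z -> (Phi y p == p %[mod (p ^ 2)%N])%Z.
Proof.
move=> hp. have p21 : (1 < p ^ 2)%N by rewrite (_ : p ^ 2 = p * p)%N ?expnS ?expn1 //; nia.
rewrite eqz_mod_dvd -Zm_inteq //.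
case/dvdzP: hp => t ht.
have hy' : y = t * p%:Z + 1 by rewrite -ht subrK.
set P := (p%:R : 'Z_(p ^ 2)).
have P2 : P ^+ 2 = 0 by apply/eqP; rewrite -natrX Zm_nat0.
have hY : (y%:~R : 'Z_(p ^ 2)) = 1 + t%:~R * P by rewrite hy' rmorphD rmorphM rmorph1 addrC.
have pw : forall i : nat, (1 + t%:~R * P) ^+ i = 1 + i%:R * (t%:~R * P).
  elim=> [|i IH]; first by rewrite expr0 mul0r addr0.
  rewrite exprSr IH -natr1.
  have -> : (1 + i%:R * (t%:~R * P)) * (1 + t%:~R * P) =
            1 + (i%:R + 1) * (t%:~R * P) + i%:R * t%:~R * t%:~R * P ^+ 2 by ring.
  by rewrite P2 mulr0 addr0.
rewrite PhiE ?y1 // rmorph_sum /=.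
under eq_bigr do rewrite rmorphXn /= hY pw.
rewrite big_split /= sumr_const card_ord -mulr_suml.
have hs : \sum_(i < p) (i%:R : 'Z_(p ^ 2)) = ('C(p, 2))%:R.
  by rewrite -natr_sum -bin2_sum big_mkord.
rewrite hs.
have := @prime_dvd_bin 2 p pp ltac:(lia). case/dvdnP => c ->.
rewrite natrM -/P.
have -> : c%:R * P * (t%:~R * P) = c%:R * t%:~R * P ^+ 2 by rewrite expr2; ring.
by rewrite P2 mulr0 addr0; apply/eqP.
Qed.

End Main.

Lemma pm1_mult (n : nat) : (0 < n)%N -> (forall q, prime q -> (q %| n)%N -> pm1_mod q 12) ->
  (n %% 12 = 1 \/ n %% 12 = 11)%N.
Proof.
elim/ltn_ind: n => n IH n0 H.
case: (ltngtP n 1) => [|n1|->]; [lia | | by left].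
have pq := pdiv_prime n1. have dq := pdiv_dvd n.
have hn : n = (n %/ pdiv n * pdiv n)%N by rewrite divnK.
have lt : (n %/ pdiv n < n)%N by apply: ltn_Pdiv => //; exact: prime_gt1.
have m0 : (0 < n %/ pdiv n)%N by rewrite divn_gt0 ?prime_gt0 // dvdn_leq.
have IHm := IH _ lt m0.
have Hm : forall q, prime q -> (q %| n %/ pdiv n)%N -> pm1_mod q 12.
  move=> q pq' hq; apply: H => //; rewrite hn; exact: dvdn_mulr.
have e : (n %% 12 = (n %/ pdiv n) %% 12 * (pdiv n %% 12) %% 12)%N by rewrite modnMm -hn.
have := H _ pq dq; rewrite /pm1_mod e.
by have [->|->] := IHm Hm => /orP[]/eqP ->; [left|right|right|left].
Qed.



Theorem theorem2p8 (p : nat) (x y : int) :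
  prime p -> (3 <= p)%N -> x ^+ 2 - 2 = y ^+ p -> y != -1 ->
  (* (1) *)
  (forall q : nat, prime q -> (q %| Phi y p)%Z -> pm1_mod q 12)
  /\
  (* (2) *)
  ((forall q : nat, prime q -> (q %| Phi y p)%Z -> q = p \/ (q %% p = 1)%N)
   /\ ((~~ (p %| y - 1)%Z /\ (Phi y p == 1 %[mod p])%Z)
       \/ ((p %| y - 1)%Z /\ (Phi y p == p %[mod (p ^ 2)%N])%Z))
   /\ ((p %| y - 1)%Z -> pm1_mod p 12))
  /\
  (* (3) *)
  (Phi y p == 1 %[mod 24])%Z
  /\
  (* (4) *)
  ((p %% 3 = 2)%N \/ p = 3%N -> ~~ (3 %| x)%Z).
Proof.
move=> pp p3 hxy hy.
have P1 : forall q : nat, prime q -> (q %| Phi y p)%Z -> pm1_mod q 12.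
  exact: (part1 p x y pp p3 hxy hy).
have h8 : (8 %| Phi y p - 1)%Z := Phi8 p x y pp p3 hxy.
have P3 : (Phi y p == 1 %[mod 24])%Z.
  have hm : (`|Phi y p| %% 12 = 1 \/ `|Phi y p| %% 12 = 11)%N.
    apply: pm1_mult; first by lia.
    by move=> q pq hq; apply: P1.
  rewrite eqz_mod_dvd; lia.
split => //.
split.
  split; first exact: (part2a p x y pp p3 hxy hy).
  split.
    case: (boolP (p %| y - 1)%Z) => h.
      by right; split => //; exact: (part2b_yes p x y pp p3 hxy hy).
    by left; split => //; exact: (part2b_no p x y pp p3 hxy).
  exact: (part2c p x y pp p3 hxy hy).
split => // hp.
apply/negP => h3.
have [_ h3'] := three p x y pp p3 hxy h3.
move: P3; rewrite eqz_mod_dvd => P3.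
case: hp => hp; lia.
Qed.
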